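(* Let $G$ be a finite group and $\alpha\in\mathbb{Z}_{\ge0}$. (i) If $(A,M)$ is a NIM-rep of the near-group fusion ring $K(G,\alpha)$ such that $M$ is a single $G$-orbit, then there are a subgroup $H\le G$ with $M\cong G/H$ as $G$-sets, and a positive integer $c$ such that $X\vartriangleright m=c\sum_{m'\in M}m'$ for all $m\in M$, and these satisfy $\alpha=c\,[G:H]-\frac{|H|}{c}$, $c$ divides $|H|$, and $c^2[G:H]\ge|H|$. (ii) Conversely, for every subgroup $H\le G$ and positive integer $c$ satisfying $\alpha=c[G:H]-|H|/c$, $c\mid|H|$ and $c^2[G:H]\ge|H|$, the free $\mathbb{Z}$-module with basis $M=\{m_{xH}: xH\in G/H\}$, with $g\vartriangleright m_{xH}=m_{gxH}$ and $X\vartriangleright m=c\sum_{m'\in M}m'$, is a NIM-rep of $K(G,\alpha)$ consisting of one $G$-orbit. Thus one-orbit NIM-reps of $K(G,\alpha)$ are parametrised by such pairs $(H,c)$.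
   Context: The near-group fusion ring $K(G,\alpha)$ is the free $\mathbb{Z}$-module with basis $G\cup\{X\}$, with multiplication given by the group law on $G$, $gX=Xg=X$ for $g\in G$, and $X^2=\sum_{g\in G}g+\alpha X$; the involution is $g^*=g^{-1}$, $X^*=X$. A NIM-rep of a fusion ring $(R,B)$ is a nonzero left $R$-module $A$ which is a free $\mathbb{Z}$-module with a fixed basis $M$, such that each $b\vartriangleright m$ ($b\in B$, $m\in M$) is a non-negative integer combination of elements of $M$, and such that for the symmetric bilinear form with $(m,m')=\delta_{m,m'}$ on $M$, $(b\vartriangleright m,m')=(m,b^*\vartriangleright m')$. For NIM-reps of $K(G,\alpha)$ each $g\in G$ permutes $M$, giving a $G$-action on $M$. *)

(* Defs.v *)
From HB Require Import structures.
From mathcomp Require Import all_boot all_order all_fingroup all_algebra.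
Set Implicit Arguments. Unset Strict Implicit. Unset Printing Implicit Defensive.
Import GRing.Theory Num.Theory.

(* Basis of the near-group fusion ring K(G,alpha), G = the whole finite group gT:
   [Some g] is the basis element g, [None] is X. *)
Section NearGroup.
Variable gT : finGroupType.

(* Structure constants: b1 * b2 = sum_b ngcoef alpha b1 b2 b * b. *)
Definition ngcoef (alpha : nat) (b1 b2 b : option gT) : nat :=
  match b1, b2 with
  | Some g, Some h => nat_of_bool (b == Some (g * h)%g)
  | Some _, None | None, Some _ => nat_of_bool (b == None)
  | None, None => if b is Some _ then 1 else alpha
  end.

Definition ngdual (b : option gT) : option gT :=
  match b with Some g => Some g^-1%g | None => None end.

(* A based module with finite basis M: N b m m' is the coefficient of m' in b |> m
   (non-negativity is built in by taking values in nat). *)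
Definition is_NIMrep (alpha : nat) (M : finType) (N : option gT -> M -> M -> nat) : Prop :=
  [/\ 0 < #|M|,
      (forall m m', N (Some 1%g) m m' = nat_of_bool (m == m')),
      (forall b1 b2 m m',
          \sum_(m'' : M) N b2 m m'' * N b1 m'' m' =
          \sum_(b : option gT) ngcoef alpha b1 b2 b * N b m m')
    & (forall b m m', N b m m' = N (ngdual b) m' m)].

Definition one_orbit (M : finType) (N : option gT -> M -> M -> nat) : Prop :=
  forall m m' : M, exists g : gT, 0 < N (Some g) m m'.

Definition cosetM (H : {group gT}) : finType :=
  {C : {set gT} | C \in lcosets H [set: gT]}.

Definition cosetN (H : {group gT}) (c : nat) (b : option gT) (m m' : cosetM H) : nat :=
  match b with
  | Some g => nat_of_bool (val m' == (g *: val m)%g)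
  | None => c
  end.

End NearGroup.

(* Main.v *)
Require Import Defs.
From mathcomp Require Import all_boot all_order all_fingroup all_algebra.
From mathcomp Require Import ring zify.
Import GRing.Theory Num.Theory.

Module Aux.
Set Implicit Arguments. Unset Strict Implicit.

Lemma sum_option (gT : finGroupType) (F : option gT -> nat) :
  \sum_(b : option gT) F b = F None + \sum_(g : gT) F (Some g).
Proof.
rewrite (bigD1 None) //=; congr (_ + _).
rewrite (reindex (@Some gT)) /=; first by apply: eq_bigl.
exists (fun b => if b is Some g then g else 1%g) => // [[g|]] //.
Qed.

Lemma sum_sq1 (I : finType) (a : I -> nat) :
  \sum_i a i * a i = 1 -> exists j, forall i, a i = (i == j).
Proof.
move=> H.
have [j|] := pickP (fun i => 0 < a i); last first.
  move=> H0; move: H; rewrite big1 // => i _; have := H0 i; rewrite lt0n => /negbFE/eqP ->//.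
move=> aj; exists j.
move: H; rewrite (bigD1 j) //= => H.
have Hj : a j = 1.
  have: a j * a j <= 1 by rewrite -H leq_addr.
  by case: (a j) aj => [|[|k]].
move: H; rewrite Hj mul1n => /eqP; rewrite eqSS sum_nat_eq0 => /forallP Hi i.
case: eqP => [->//|/eqP ne]; have := Hi i; rewrite ne /= muln_eq0 orbb => /eqP //.
Qed.

Section P1.
Variables (gT : finGroupType) (alpha : nat) (M : finType) (N : option gT -> M -> M -> nat).
Hypothesis HN : is_NIMrep alpha N.
Hypothesis Horb : one_orbit N.

Let Hpos : 0 < #|M|. Proof. by case: HN. Qed.
Let H1 : forall m m', N (Some 1%g) m m' = nat_of_bool (m == m'). Proof. by case: HN. Qed.
Let Has : forall b1 b2 m m',
          \sum_(m'' : M) N b2 m m'' * N b1 m'' m' =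
          \sum_(b : option gT) ngcoef alpha b1 b2 b * N b m m'. Proof. by case: HN. Qed.
Let Hd : forall b m m', N b m m' = N (ngdual b) m' m. Proof. by case: HN. Qed.

Lemma assocGG g h m m' :
  \sum_(m'' : M) N (Some h) m m'' * N (Some g) m'' m' = N (Some (g * h)%g) m m'.
Proof.
rewrite Has (bigD1 (Some (g * h)%g)) //= eqxx mul1n big1 ?addn0 //.
by move=> [b|] //=; rewrite eq_sym => /negbTE ->.
Qed.

Lemma assocGX g m m' :
  \sum_(m'' : M) N None m m'' * N (Some g) m'' m' = N None m m'.
Proof.
rewrite Has (bigD1 None) //= mul1n big1 ?addn0 //.
by move=> [b|] //=.
Qed.

Lemma assocXG g m m' :
  \sum_(m'' : M) N (Some g) m m'' * N None m'' m' = N None m m'.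
Proof.
rewrite Has (bigD1 None) //= mul1n big1 ?addn0 //.
by move=> [b|] //=.
Qed.

Lemma assocXX m m' :
  \sum_(m'' : M) N None m m'' * N None m'' m' =
  alpha * N None m m' + \sum_(g : gT) N (Some g) m m'.
Proof.
rewrite Has sum_option /=; congr (_ + _); apply: eq_bigr => g _; by rewrite mul1n.
Qed.

Definition f (g : gT) (m : M) : M := odflt m [pick m' | 0 < N (Some g) m m'].

Lemma Nf g m m' : N (Some g) m m' = (m' == f g m).
Proof.
have: \sum_i N (Some g) m i * N (Some g) m i = 1.
  transitivity (\sum_i N (Some g) m i * N (Some g^-1)%g i m).
    by apply: eq_bigr => i _; rewrite (Hd (Some g^-1%g)) /= invgK.
  by rewrite assocGG mulVg H1 eqxx.
case/sum_sq1 => j Hj.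
rewrite /f; case: pickP => [i|]; last by move/(_ j); rewrite Hj eqxx.
rewrite Hj lt0n => /eqP; case: eqP => // -> _ /=; by rewrite Hj.
Qed.

Lemma f1 m : f 1%g m = m.
Proof. by have := H1 m m; rewrite Nf eqxx; case: eqP => // <-. Qed.

Lemma fM g h m : f g (f h m) = f (g * h)%g m.
Proof.
have := assocGG g h m (f g (f h m)).
rewrite (bigD1 (f h m)) //= !Nf !eqxx mul1n big1 ?addn0; first by case: eqP.
by move=> i /negbTE; rewrite Nf eq_sym => ->.
Qed.

Lemma fK g m : f g^-1%g (f g m) = m.
Proof. by rewrite fM mulVg f1. Qed.

Lemma fKV g m : f g (f g^-1%g m) = m.
Proof. by rewrite fM mulgV f1. Qed.

Lemma orb m m' : exists g, m' = f g m.
Proof.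
case: (Horb m m') => g; rewrite Nf; case: (m' =P f g m) => [->|] //; by exists g.
Qed.

Lemma Xr g m k : N None m (f g k) = N None m k.
Proof.
rewrite -(assocGX g m (f g k)) (bigD1 k) //= Nf eqxx muln1 big1 ?addn0 //.
by move=> i ne; rewrite Nf (inj_eq (can_inj (fK g))) eq_sym (negbTE ne) muln0.
Qed.

Lemma Xl g m k : N None (f g m) k = N None m k.
Proof.
rewrite -(assocXG g m k) (bigD1 (f g m)) //= Nf eqxx mul1n big1 ?addn0 //.
by move=> i ne; rewrite Nf (negbTE ne).
Qed.

Variable m0 : M.

Lemma Xc m m' : N None m m' = N None m0 m0.
Proof.
have [g ->] := orb m0 m; have [h ->] := orb m0 m'; by rewrite Xl Xr.
Qed.

Definition Hs := [set g | f g m0 == m0].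
Lemma Hgs : group_set Hs.
Proof.
apply/group_setP; split; first by rewrite inE f1.
by move=> x y; rewrite !inE -fM => /eqP Ex /eqP ->; rewrite Ex.
Qed.
Definition Hg : {group gT} := Group Hgs.

Definition phi m := [set g | f g m0 == m].

Lemma phiE x : phi (f x m0) = (x *: Hg)%g.
Proof.
apply/setP => g; rewrite inE mem_lcoset inE -fM.
apply/eqP/eqP => [->|E]; first by rewrite fK.
by rewrite -[f g m0](fKV x) E.
Qed.

Lemma phi_inj : injective phi.
Proof.
move=> m m' E; have [x Ex] := orb m0 m.
have : x \in phi m by rewrite inE Ex.
by rewrite E inE => /eqP <-.
Qed.

Lemma phi_lcosets : lcosets Hg [set: gT] = phi @: [set: M].
Proof.
apply/setP => C; apply/lcosetsP/imsetP => [[x _ ->]|[m _ ->]].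
  by exists (f x m0); rewrite ?inE ?phiE.
by have [x ->] := orb m0 m; exists x; rewrite ?inE ?phiE.
Qed.

Lemma cardM : #|M| = #|[set: gT] : Hg|%g.
Proof.
by rewrite -card_lcosets phi_lcosets card_imset //; [rewrite cardsT|apply: phi_inj].
Qed.

Lemma cardH : \sum_(g : gT) N (Some g) m0 m0 = #|Hg|.
Proof.
rewrite -sum1_card [in RHS]big_mkcond /=; apply: eq_bigr => g _.
by rewrite Nf inE eq_sym; case: eqP.
Qed.

Lemma phiN g m m' : N (Some g) m m' = (phi m' == (g *: phi m)%g).
Proof.
have [x ->] := orb m0 m.
by rewrite phiE -lcosetM -phiE -fM Nf (inj_eq phi_inj).
Qed.

End P1.

Section P2.
Variables (gT : finGroupType) (H : {group gT}) (c alpha : nat).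

Lemma act_mem g C : C \in lcosets H [set: gT] -> (g *: C)%g \in lcosets H [set: gT].
Proof.
case/lcosetsP => x _ ->; apply/lcosetsP; exists (g * x)%g; by rewrite ?inE ?lcosetM.
Qed.

Definition act g (m : cosetM H) : cosetM H := exist _ (g *: val m)%g (act_mem g (valP m)).

Lemma Nact g m m' : cosetN c (Some g) m m' = (m' == act g m).
Proof. by rewrite /cosetN -val_eqE. Qed.

Lemma act1 m : act 1%g m = m.
Proof. by apply: val_inj; rewrite /= lcoset1. Qed.
Lemma actM g h m : act g (act h m) = act (g * h)%g m.
Proof. by apply: val_inj; rewrite /= lcosetM. Qed.
Lemma actK g m : act g^-1%g (act g m) = m.
Proof. by rewrite actM mulVg act1. Qed.
Lemma actKV g m : act g (act g^-1%g m) = m.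
Proof. by rewrite actM mulgV act1. Qed.

Lemma count_g (m m' : cosetM H) :
  \sum_(g : gT) cosetN c (Some g) m m' = #|H|.
Proof.
case: m => C /= /lcosetsP [x _ EC]; case: m' => D /= /lcosetsP [y _ ED].
rewrite /cosetN /= EC ED.
rewrite -(card_lcoset H y) -(card_rcoset (y *: H)%g x^-1%g) -sum1_card [in RHS]big_mkcond /=.
apply: eq_bigr => g _; rewrite mem_rcoset invgK -lcosetM eq_sym.
by case: lcoset_eqP => [->|ne]; [rewrite eqxx | case: eqP => // E; case: ne].
Qed.

Lemma cardM2 : #|{: cosetM H}| = #|[set: gT] : H|%g.
Proof. by rewrite card_sig -card_lcosets; apply: eq_card. Qed.

Lemma sum_opt_one (F : option gT -> nat) b0 :
  \sum_(b : option gT) (nat_of_bool (b == b0)) * F b = F b0.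
Proof.
rewrite (bigD1 b0) //= eqxx mul1n big1 ?addn0 // => b /negbTE ->; by [].
Qed.

Lemma part2_nim : 0 < c -> #|{: cosetM H}| * (c * c) = alpha * c + #|H| ->
  is_NIMrep alpha (@cosetN gT H c) /\ one_orbit (@cosetN gT H c).
Proof.
move=> c0 E; split; last first.
  case=> C /= /lcosetsP [x _ EC] [D /= /lcosetsP [y _ ED]].
  exists (y * x^-1)%g; rewrite /cosetN /= EC ED -lcosetM mulgKV eqxx //.
split.
- apply/card_gt0P; have Hm : (H : {set gT}) \in lcosets H [set: gT].
    by apply/lcosetsP; exists 1%g; rewrite ?inE ?lcoset1.
  by exists (exist (fun C : {set gT} => C \in lcosets H [set: gT]) _ Hm : cosetM H).
- by move=> m m'; rewrite Nact act1 eq_sym.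
- case=> [g|] [h|] m m'.
  + rewrite (sum_opt_one _ (Some (g * h)%g)).
    rewrite (bigD1 (act h m)) // !Nact eqxx mul1n big1 => [|i /negbTE].
      by rewrite /= addn0 actM.
    by rewrite Nact => ->.
  + rewrite [in RHS](eq_bigr (fun b => nat_of_bool (b == None) * cosetN c b m m')); last by case.
    rewrite sum_opt_one (bigD1 (act g^-1%g m')) // Nact actKV eqxx muln1 big1 => [|i ne].
      by rewrite /= addn0.
    rewrite Nact; case: (m' =P act g i) => [Ei|]; last by rewrite muln0.
    by move: ne; rewrite Ei actK eqxx.
  + rewrite [in RHS](eq_bigr (fun b => nat_of_bool (b == None) * cosetN c b m m')); last by case.
    rewrite sum_opt_one (bigD1 (act h m)) // Nact eqxx mul1n big1 => [|i /negbTE].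
      by rewrite /= addn0.
    by rewrite Nact => ->.
  + rewrite sum_option (eq_bigr (fun g => cosetN c (Some g) m m')); last by move=> g _; rewrite /= mul1n.
    rewrite count_g /= -E (eq_bigr (fun _ => c * c)) // sum_nat_const //.
- case=> [g|] m m' //; rewrite /ngdual !Nact; congr (nat_of_bool _); by apply/eqP/eqP => ->; rewrite ?actK ?actKV.
Qed.

End P2.

End Aux.
Import Aux.

Lemma arith_to_Q (alpha c idx h : nat) : 0 < c ->
  idx * (c * c) = alpha * c + h ->
  (alpha%:Q = c%:Q * idx%:Q - h%:Q / c%:Q)%R.
Proof.
move=> c0 E.
have Eh : (h%:Q = (idx * (c * c))%:R - (alpha * c)%:R)%R.
  by rewrite E natrD; ring.
have cn0 : (c%:Q != 0)%R by rewrite pnatr_eq0 -lt0n.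
by rewrite Eh -!pmulrn !natrM; field.
Qed.

Lemma arith_of_Q (alpha c idx h : nat) : 0 < c ->
  (alpha%:Q = c%:Q * idx%:Q - h%:Q / c%:Q)%R ->
  idx * (c * c) = alpha * c + h.
Proof.
move=> c0 E.
have cn0 : (c%:Q != 0)%R by rewrite pnatr_eq0 -lt0n.
move: E; rewrite -!pmulrn => E.
apply/eqP; rewrite -(eqr_nat rat) natrD !natrM E; apply/eqP; by field.
Qed.

Theorem proposition3p14 (gT : finGroupType) (alpha : nat) :
  (forall (M : finType) (N : option gT -> M -> M -> nat),
     is_NIMrep alpha N -> one_orbit N ->
     exists (H : {group gT}) (c : nat),
       0 < c /\
       [/\ (* M ≅ G/H as G-sets *)
           (exists phi : M -> {set gT},
              [/\ injective phi,
                  (forall m, phi m \in lcosets H [set: gT]),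
                  (forall C, C \in lcosets H [set: gT] -> exists m, phi m = C)
                & (forall g m m', N (Some g) m m' = nat_of_bool (phi m' == (g *: phi m)%g))]),
           (forall m m', N None m m' = c),
           (alpha%:Q = c%:Q * (#|[set: gT] : H|)%g%:Q - #|H|%:Q / c%:Q)%R,
           c %| #|H|
         & #|H| <= c ^ 2 * (#|[set: gT] : H|)%g]) /\
  (forall (H : {group gT}) (c : nat),
     0 < c ->
     (alpha%:Q = c%:Q * (#|[set: gT] : H|)%g%:Q - #|H|%:Q / c%:Q)%R ->
     c %| #|H| ->
     #|H| <= c ^ 2 * (#|[set: gT] : H|)%g ->
     is_NIMrep alpha (@cosetN gT H c) /\ one_orbit (@cosetN gT H c)).
Proof.
split; last first.
  move=> H c c0 Ha _ _; apply: part2_nim => //.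
  by rewrite cardM2; apply: arith_of_Q.
move=> M N HN Hor.
have [Hp _ _ _] := HN.
have /card_gt0P [m0 _] := Hp.
set c := N None m0 m0.
set H := Hg HN m0.
have E : #|[set: gT] : H|%g * (c * c) = alpha * c + #|H|.
  have := assocXX HN m0 m0; rewrite (cardH HN m0).
  rewrite (eq_bigr (fun _ => c * c)) => [|i _]; last first.
    by rewrite (Xc HN Hor m0 m0 i) (Xc HN Hor m0 i m0).
  by rewrite sum_nat_const (_ : #|xpredT| = #|M|) ?(cardM HN Hor m0) //; apply: eq_card.
have c0 : 0 < c.
  rewrite lt0n; apply/eqP => cz; move: E (cardG_gt0 H).
  by rewrite cz !muln0 add0n => <-.
exists H, c; split => //; split.
- exists (phi N m0); split.
  + exact: phi_inj HN Hor m0.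
  + by move=> m; rewrite (phi_lcosets HN Hor m0); apply: imset_f.
  + by move=> C; rewrite (phi_lcosets HN Hor m0) => /imsetP [m _ ->]; exists m.
  + exact: phiN HN Hor m0.
- by move=> m m'; rewrite (Xc HN Hor m0).
- exact: arith_to_Q.
- rewrite -(dvdn_addr _ (dvdn_mull alpha (dvdnn c))) -E.
  by apply/dvdn_mull/dvdn_mulr/dvdnn.
- by rewrite -mulnn mulnC E leq_addl.
Qed.
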